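(* Let $M\ge 1$ be an integer, let $\alpha\ge 1$ be real, let $z$ be a real number with $|z|<2$, and let $p_1,\dots,p_M$ and $b_1,\dots,b_M$ be integers such that each $p_m$ is even and each $b_m$ is odd (i.e. $p_m\in 2\mathbb{Z}$ and $b_m-1\in 2\mathbb{Z}$). Define $$y = z + \alpha\sum_{m=1}^{M} p_m b_m .$$ Then $$z=\begin{cases} (y \bmod 4\alpha)-2\alpha, & \text{if } \tfrac12\sum_{m=1}^M p_m \text{ is odd},\\[2pt] \big((y+2\alpha) \bmod 4\alpha\big)-2\alpha, & \text{otherwise}.\end{cases}$$
   Context: For a real number $u$ and $a>0$, $u \bmod a$ denotes the unique element of $[0,a)$ congruent to $u$ modulo $a$, i.e. $u \bmod a = u - a\lfloor u/a\rfloor$. *)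

(* Defs.v *)
From Stdlib Require Import Reals ZArith List Lra Lia.
Open Scope R_scope.

(* floor of a real number: Int_part x = up x - 1 is the unique integer k
   with k <= x < k + 1. *)
Definition rfloor (x : R) : Z := Int_part x.

Definition rmod (u a : R) : R := u - a * IZR (rfloor (u / a)).

Definition zsum (f : nat -> Z) (M : nat) : Z :=
  fold_right Z.add 0%Z (map f (seq 1 M)).

(* Main.v *)
Require Import Defs.
From Stdlib Require Import Reals ZArith List Lra Lia.
Open Scope R_scope.

Lemma fold_key (p b : nat -> Z) (l : list nat) :
  (forall m, In m l -> Z.Even (p m) /\ Z.Odd (b m)) ->
  exists K Q : Z, fold_right Z.add 0%Z (map p l) = (2 * Q)%Z /\
    fold_right Z.add 0%Z (map (fun m => (p m * b m)%Z) l) = (4 * K + 2 * Q)%Z.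
Proof.
  induction l as [|a l IH]; intros H.
  - exists 0%Z, 0%Z; simpl; lia.
  - destruct IH as [K [Q [H1 H2]]].
    { intros m Hm; apply H; simpl; auto. }
    destruct (H a (or_introl eq_refl)) as [[q Hq] [c Hc]].
    exists (K + q * c)%Z, (Q + q)%Z. cbn [map fold_right]. rewrite H1, H2, Hq, Hc. split; ring.
Qed.

Lemma rmod_shift (k : Z) (x a : R) : 0 < a -> 0 <= x < a ->
  rmod (IZR k * a + x) a = x.
Proof.
  intros Ha Hx. unfold rmod, rfloor, Int_part.
  assert (E : (IZR k * a + x) / a = IZR k + x / a) by (field; lra).
  rewrite E.
  assert (H0 : 0 <= x / a) by (apply Rmult_le_pos; [lra | left; apply Rinv_0_lt_compat; lra]).
  assert (H1 : x / a < 1).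
  { apply (Rmult_lt_reg_r a); [lra|]. unfold Rdiv. rewrite Rmult_assoc, Rinv_l by lra. lra. }
  rewrite <- (up_tech (IZR k + x / a) k).
  - replace (k + 1 - 1)%Z with k by ring. ring.
  - lra.
  - rewrite plus_IZR. lra.
Qed.

Theorem mainTheorem1 (M : nat) (alpha z : R) (p b : nat -> Z)
  (hM : (1 <= M)%nat) (halpha : 1 <= alpha) (hz : Rabs z < 2)
  (hp : forall m : nat, (1 <= m <= M)%nat -> Z.Even (p m))
  (hb : forall m : nat, (1 <= m <= M)%nat -> Z.Odd (b m)) :
  let y := z + alpha * IZR (zsum (fun m => (p m * b m)%Z) M) in
  z = (if Z.odd (zsum p M / 2)%Z
       then rmod y (4 * alpha) - 2 * alpha
       else rmod (y + 2 * alpha) (4 * alpha) - 2 * alpha).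
Proof.
  intro y. unfold y. clear y.
  destruct (fold_key p b (seq 1 M)) as [K [Q [H1 H2]]].
  { intros m Hm. apply in_seq in Hm. split; [apply hp | apply hb]; lia. }
  unfold zsum. rewrite H1, H2.
  replace (2 * Q / 2)%Z with Q by (rewrite Z.mul_comm, Z.div_mul; lia).
  apply Rabs_def2 in hz.
  destruct (Z.odd Q) eqn:HQ.
  - destruct (Z.odd_spec Q) as [Ho _]. destruct (Ho HQ) as [r Hr]. subst Q.
    replace (z + alpha * IZR (4 * K + 2 * (2 * r + 1)))
      with (IZR (K + r) * (4 * alpha) + (z + 2 * alpha))
      by (rewrite !plus_IZR, !mult_IZR, !plus_IZR, !mult_IZR; ring).
    rewrite rmod_shift; lra.
  - assert (HE : Z.even Q = true) by (rewrite <- Z.negb_odd, HQ; reflexivity).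
    destruct (proj1 (Z.even_spec Q) HE) as [r Hr]. subst Q.
    replace (z + alpha * IZR (4 * K + 2 * (2 * r)) + 2 * alpha)
      with (IZR (K + r) * (4 * alpha) + (z + 2 * alpha))
      by (rewrite !plus_IZR, !mult_IZR; ring).
    rewrite rmod_shift; lra.
Qed.
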